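(* Let $D\subset\mathbb R^d$ be a domain, $V=H_0^1(D)$, $\mathcal V=L_2(Y,V,\sigma)$, and let $B\colon\mathcal V\to\mathcal V'$ be given by $\langle Bv,w\rangle=\sum_{\nu\in\mathcal F}\sum_{\nu'\in\mathcal F}\int_D[a]_{\nu\nu'}\nabla[v]_{\nu'}\cdot\nabla[w]_\nu\,dx$ with functions $[a]_{\nu\nu'}\in L_\infty(D)$ satisfying $[a]_{\nu\nu'}=[a]_{\nu'\nu}$. Then $\|B\|_{\mathcal V\to\mathcal V'}\le\max_{\nu\in\mathcal F}\Bigl\|\sum_{\nu'\in\mathcal F}|[a]_{\nu\nu'}|\Bigr\|_{L_\infty(D)}.$
   Context: $Y=[-1,1]^{\mathcal M}$ for a countable index set $\mathcal M$, $\sigma$ the uniform product probability measure on $Y$, $\mathcal F=\{\nu\in\mathbb N_0^{\mathcal M}:\#\operatorname{supp}\nu<\infty\}$, $L_\nu(y)=\prod_\mu L_{\nu_\mu}(y_\mu)$ with $L_k$ the Legendre polynomials orthonormal w.r.t. $dy/2$ on $[-1,1]$, and $[v]_\nu=\int_Y v(y)L_\nu(y)\,d\sigma(y)$. The norm on $\mathcal V$ is $\|v\|_{\mathcal V}^2=\sum_\nu\|\nabla[v]_\nu\|_{L_2(D)}^2$. *)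

(* Defs.v *)
From HB Require Import structures.
From mathcomp Require Import all_boot all_order all_algebra.
From mathcomp Require Import all_classical all_reals all_analysis.
From mathcomp Require Import ess_sup_inf.
Set Implicit Arguments. Unset Strict Implicit. Unset Printing Implicit Defensive.
Import Order.TTheory GRing.Theory Num.Theory.
Local Open Scope classical_set_scope.
Local Open Scope ring_scope.

Definition mindices (M : countType) : set (M -> nat) :=
  [set nu | finite_set [set m | nu m != 0%N]].

Arguments mindices : clear implicits.

(* Signed sum of a family of extended reals over a set
   (meaningful for absolutely summable families):
   sum of positive parts minus sum of negative parts. *)
Definition ssum (T : choiceType) (R : realType) (S : set T) (f : T -> \bar R)
  : \bar R :=
  (\esum_(i in S) (f^\+ i) - \esum_(i in S) (f^\- i))%E.

Section defs.
Context (R : realType) (dX : measure_display) (X : measurableType dX)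
  (mu : {measure set X -> \bar R}) (d : nat) (M : countType).

Definition dotd (u v : 'I_d -> R) : R := \sum_(i < d) u i * v i.

Definition L2field (g : X -> 'I_d -> R) : Prop :=
  (forall i, measurable_fun [set: X] (fun x => g x i)) /\
  (\int[mu]_x ((dotd (g x) (g x))%:E) < +oo)%E.

(* A family of gradients ( grad [v]_nu )_{nu in F}; its squared V-norm is
   sum_nu || grad [v]_nu ||_{L2(D)}^2. *)
Definition sqnormV (G : (M -> nat) -> X -> 'I_d -> R) : \bar R :=
  (\esum_(nu in mindices M) \int[mu]_x ((dotd (G nu x) (G nu x))%:E))%E.

Definition normV (G : (M -> nat) -> X -> 'I_d -> R) : R :=
  Num.sqrt (fine (sqnormV G)).

Definition Linfty (f : X -> R) : Prop :=
  measurable_fun [set: X] f /\ (ess_sup mu (fun x => (`|f x|)%:E) < +oo)%E.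

Definition schur_bound (a : (M -> nat) -> (M -> nat) -> X -> R) : \bar R :=
  ereal_sup [set ess_sup mu (fun x =>
                  (\esum_(nu' in mindices M) (`|a nu nu' x|)%:E)%E)
            | nu in mindices M].

Definition Bterm (a : (M -> nat) -> (M -> nat) -> X -> R)
  (Gv Gw : (M -> nat) -> X -> 'I_d -> R) (p : (M -> nat) * (M -> nat)) : \bar R :=
  (\int[mu]_x ((a p.1 p.2 x * dotd (Gv p.2 x) (Gw p.1 x))%:E))%E.

Definition Bform (a : (M -> nat) -> (M -> nat) -> X -> R)
  (Gv Gw : (M -> nat) -> X -> 'I_d -> R) : \bar R :=
  ssum (mindices M `*` mindices M) (Bterm a Gv Gw).

End defs.

(* Main.v *)
Require Import Defs.
From HB Require Import structures.
From mathcomp Require Import all_boot all_order all_algebra.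
From mathcomp Require Import all_classical all_reals all_analysis.
From mathcomp Require Import ess_sup_inf.
From mathcomp Require Import ring lra.
Import Order.TTheory GRing.Theory Num.Theory.
Local Open Scope classical_set_scope.
Local Open Scope ring_scope.

Lemma prod_bound (R : realType) (t x y : R) : 0 < t ->
  `|x * y| <= (t * (x * x) + t^-1 * (y * y)) / 2.
Proof.
move=> t0.
have ti : t * t^-1 = 1 by rewrite mulfV // gt_eqF.
have tip : 0 < t^-1 by rewrite invr_gt0.
have h : 0 <= (t * `|x| - `|y|) ^+ 2 * t^-1 by rewrite mulr_ge0 ?sqr_ge0 ?ltW.
have ex : x * x = `|x| * `|x| by rewrite -normrM ger0_norm // -expr2 sqr_ge0.
have ey : y * y = `|y| * `|y| by rewrite -normrM ger0_norm // -expr2 sqr_ge0.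
rewrite normrM ex ey.
set X := `|x| in h *; set Y := `|y| in h *.
have e : (t * X - Y) ^+ 2 * t^-1 = t * (X * X) + t^-1 * (Y * Y) - 2 * (X * Y).
  rewrite expr2.
  have -> : (t * X - Y) * (t * X - Y) * t^-1 = (t * t^-1) * t * (X * X) - 2 * (t * t^-1) * (X * Y) + t^-1 * (Y * Y) by ring.
  rewrite ti; ring.
rewrite e in h; lra.
Qed.

Lemma dotd_bound (R : realType) (d : nat) (t : R) (u v : 'I_d -> R) : 0 < t ->
  `|dotd u v| <= (t * dotd u u + t^-1 * dotd v v) / 2.
Proof.
move=> t0; rewrite /dotd.
apply: (le_trans (ler_norm_sum _ _ _)).
have -> : (t * (\sum_(i < d) u i * u i) + t^-1 * (\sum_(i < d) v i * v i)) / 2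
   = \sum_(i < d) (t * (u i * u i) + t^-1 * (v i * v i)) / 2.
  by rewrite -mulr_suml big_split /= !mulr_sumr.
by apply: ler_sum => i _; apply: prod_bound.
Qed.

Lemma dotd_ge0 (R : realType) (d : nat) (u : 'I_d -> R) : 0 <= dotd u u.
Proof. by apply: sumr_ge0 => i _; rewrite -expr2 sqr_ge0. Qed.

Lemma opt_bound (R : realType) (r A B e : R) : 0 <= r -> 0 <= A -> 0 <= B ->
  (forall t, 0 < t -> e <= t * r / 2 * A + r / (2 * t) * B) ->
  e <= r * (Num.sqrt A * Num.sqrt B).
Proof.
move=> r0 A0 B0 H.
have sA := sqr_sqrtr A0; have sB := sqr_sqrtr B0.
have sA0 : 0 <= Num.sqrt A := sqrtr_ge0 A.
have sB0 : 0 <= Num.sqrt B := sqrtr_ge0 B.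
have [Ap|] := ltP 0 A; have [Bp|] := ltP 0 B.
- have sAp : 0 < Num.sqrt A by rewrite sqrtr_gt0.
  have sBp : 0 < Num.sqrt B by rewrite sqrtr_gt0.
  have := H (Num.sqrt B / Num.sqrt A) (divr_gt0 sBp sAp).
  have -> : Num.sqrt B / Num.sqrt A * r / 2 * A + r / (2 * (Num.sqrt B / Num.sqrt A)) * B
     = r * (Num.sqrt A * Num.sqrt B).
    move: sA sB sAp sBp; set a := Num.sqrt A; set b := Num.sqrt B.
    move=> <- <- ap bp; rewrite !expr2; field.
    by rewrite !gt_eqF.
  by [].
- move=> B0'; have Be : B = 0 by apply/eqP; rewrite eq_le B0' B0.
  rewrite Be sqrtr0 mulr0 mulr0.
  rewrite leNgt; apply/negP => ep.
  have tp : 0 < e / (r * A + 1) by rewrite divr_gt0 // ltr_wpDl // mulr_ge0.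
  have := H _ tp; rewrite Be mulr0 addr0.
  have : e / (r * A + 1) * r / 2 * A < e.
    have -> : e / (r * A + 1) * r / 2 * A = e * (r * A / (2 * (r * A + 1))).
      have rA1 : r * A + 1 != 0 by rewrite gt_eqF // ltr_wpDl // mulr_ge0.
      by field.
    have rA0 : 0 <= r * A by rewrite mulr_ge0.
    rewrite -[ltRHS]mulr1 ltr_pM2l // ltr_pdivrMr ?mulr_gt0 ?ltr_wpDl //.
    lra.
  lra.
- move=> A0'; have Ae : A = 0 by apply/eqP; rewrite eq_le A0' A0.
  rewrite Ae sqrtr0 mul0r mulr0.
  rewrite leNgt; apply/negP => ep.
  have tp : 0 < (r * B + 1) / e by rewrite divr_gt0 // ltr_wpDl // mulr_ge0.
  have := H _ tp; rewrite Ae mulr0 add0r.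
  have : r / (2 * ((r * B + 1) / e)) * B < e.
    have -> : r / (2 * ((r * B + 1) / e)) * B = e * (r * B / (2 * (r * B + 1))).
      have rB1 : r * B + 1 != 0 by rewrite gt_eqF // ltr_wpDl // mulr_ge0.
      by field; rewrite rB1 gt_eqF.
    have rB0 : 0 <= r * B by rewrite mulr_ge0.
    rewrite -[ltRHS]mulr1 ltr_pM2l // ltr_pdivrMr ?mulr_gt0 ?ltr_wpDl //.
    lra.
  lra.
- move=> _ A0'; have Ae : A = 0 by apply/eqP; rewrite eq_le A0' A0.
  rewrite Ae sqrtr0 mul0r mulr0.
  rewrite leNgt; apply/negP => ep.
  have tp : 0 < (r * B + 1) / e by rewrite divr_gt0 // ltr_wpDl // mulr_ge0.
  have := H _ tp; rewrite Ae mulr0 add0r.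
  have : r / (2 * ((r * B + 1) / e)) * B < e.
    have -> : r / (2 * ((r * B + 1) / e)) * B = e * (r * B / (2 * (r * B + 1))).
      have rB1 : r * B + 1 != 0 by rewrite gt_eqF // ltr_wpDl // mulr_ge0.
      by field; rewrite rB1 gt_eqF.
    have rB0 : 0 <= r * B by rewrite mulr_ge0.
    rewrite -[ltRHS]mulr1 ltr_pM2l // ltr_pdivrMr ?mulr_gt0 ?ltr_wpDl //.
    lra.
  lra.
Qed.

Lemma sum_rect (R : realType) (T : eqType) (s1 s2 : seq T) (b : T -> T -> R)
  (G H : T -> R) (c t : R) : 0 < t ->
  (forall i j, 0 <= b i j) -> (forall j, 0 <= G j) -> (forall i, 0 <= H i) ->
  (forall i, i \in s1 -> \sum_(j <- s2) b i j <= c) ->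
  (forall j, j \in s2 -> \sum_(i <- s1) b i j <= c) ->
  \sum_(i <- s1) \sum_(j <- s2) b i j * ((t * G j + t^-1 * H i) / 2) <=
  t * c / 2 * \sum_(j <- s2) G j + c / (2 * t) * \sum_(i <- s1) H i.
Proof.
move=> t0 b0 G0 H0 h1 h2.
have -> : \sum_(i <- s1) \sum_(j <- s2) b i j * ((t * G j + t^-1 * H i) / 2) =
  t / 2 * \sum_(j <- s2) (G j * \sum_(i <- s1) b i j) +
  (2 * t)^-1 * \sum_(i <- s1) (H i * \sum_(j <- s2) b i j).
  transitivity (\sum_(i <- s1) \sum_(j <- s2) (t / 2 * (G j * b i j)) +
    \sum_(i <- s1) \sum_(j <- s2) ((2 * t)^-1 * (H i * b i j))).
    rewrite -big_split; apply: eq_bigr => i _; rewrite -big_split.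
    apply: eq_bigr => j _ /=; rewrite invfM; field; by rewrite gt_eqF.
  congr (_ + _).
    rewrite exchange_big /= mulr_sumr; apply: eq_bigr => j _.
    by rewrite mulr_sumr mulr_sumr; apply: eq_bigr => i _.
  rewrite mulr_sumr; apply: eq_bigr => i _.
  by rewrite mulr_sumr mulr_sumr; apply: eq_bigr => j _.
have -> : t * c / 2 * \sum_(j <- s2) G j + c / (2 * t) * \sum_(i <- s1) H i =
  t / 2 * \sum_(j <- s2) (G j * c) + (2 * t)^-1 * \sum_(i <- s1) (H i * c).
  rewrite -!mulr_suml; field; by rewrite gt_eqF.
apply: lerD.
- apply: ler_wpM2l; first by rewrite divr_ge0 // ltW.
  by rewrite !big_seq; apply: ler_sum => j j2; rewrite ler_wpM2l // h2.
- apply: ler_wpM2l; first by rewrite invr_ge0 mulr_ge0 // ltW.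
  by rewrite !big_seq; apply: ler_sum => i i1; rewrite ler_wpM2l // h1.
Qed.

Lemma ae_seq (R : realType) (dX : measure_display) (X : measurableType dX)
  (mu : {measure set X -> \bar R}) (T : eqType) (s : seq T) (P : T -> X -> Prop) :
  (forall i, i \in s -> {ae mu, forall x, P i x}) ->
  {ae mu, forall x, forall i, i \in s -> P i x}.
Proof.
elim: s => [|i s IH] H.
  by apply: aeW => x i; rewrite in_nil.
have H1 := H i (mem_head _ _).
have H2 : {ae mu, forall x, forall j, j \in s -> P j x}.
  by apply: IH => j js; apply: H; rewrite in_cons js orbT.
apply: filterS2 H1 H2 => x P1 P2 j; rewrite in_cons => /orP[/eqP->//|]; exact: P2.
Qed.

Lemma ssum_le (T : choiceType) (R : realType) (S : set T) (f : T -> \bar R) :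
  (`|ssum S f| <= \esum_(i in S) `|f i|)%E.
Proof.
rewrite /ssum; apply: le_trans (lee_abs_sub _ _) _.
rewrite !gee0_abs; try by apply: esum_ge0 => i _.
rewrite -esumD //.
apply: le_esum => i _.
by have := congr1 (fun g => g i) (fune_abse f) => /= ->.
Qed.

Lemma dotd0l (R : realType) (d : nat) (u v : 'I_d -> R) :
  dotd u u = 0 -> dotd u v = 0.
Proof.
move=> H.
have ui i : u i = 0.
  have h0 : forall i : 'I_d, predT i -> 0 <= u i * u i.
    by move=> j _; rewrite -expr2 sqr_ge0.
  have := @psumr_eq0P R _ predT (fun i => u i * u i) h0 H i isT.
  by move/eqP; rewrite mulf_eq0 orbb => /eqP.
by rewrite /dotd big1 // => i _; rewrite ui mul0r.
Qed.

Lemma dotd0r (R : realType) (d : nat) (u v : 'I_d -> R) :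
  dotd v v = 0 -> dotd u v = 0.
Proof.
move=> H; rewrite -(@dotd0l R d v u H) /dotd.
by apply: eq_bigr => i _; rewrite mulrC.
Qed.

Section main.
Local Open Scope ereal_scope.
Context (R : realType) (dX : measure_display) (X : measurableType dX)
  (mu : {measure set X -> \bar R}) (d : nat) (M : countType)
  (a : (M -> nat) -> (M -> nat) -> X -> R)
  (ha : forall nu nu', nu \in mindices M -> nu' \in mindices M ->
          Linfty mu (a nu nu'))
  (hsym : forall nu nu', nu \in mindices M -> nu' \in mindices M ->
          {ae mu, forall x, a nu nu' x = a nu' nu x})
  (Gv Gw : (M -> nat) -> X -> 'I_d -> R)
  (hGv : forall nu, nu \in mindices M -> L2field mu (Gv nu))
  (hGw : forall nu, nu \in mindices M -> L2field mu (Gw nu)).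

Local Notation F := (mindices M).

Lemma mdot (G H : X -> 'I_d -> R) :
  (forall i, measurable_fun [set: X] (fun x => G x i)) ->
  (forall i, measurable_fun [set: X] (fun x => H x i)) ->
  measurable_fun [set: X] (fun x => dotd (G x) (H x)).
Proof.
move=> mG mH; rewrite /dotd.
by apply: measurable_sum => i; apply: measurable_realfun.measurable_funM.
Qed.

Lemma ma nu nu' : F nu -> F nu' -> measurable_fun [set: X] (a nu nu').
Proof. by move=> h h'; case: (ha nu nu' (mem_set h) (mem_set h')). Qed.

Lemma mGv nu i : F nu -> measurable_fun [set: X] (fun x => Gv nu x i).
Proof. by move=> h; case: (hGv nu (mem_set h)). Qed.

Lemma mGw nu i : F nu -> measurable_fun [set: X] (fun x => Gw nu x i).
Proof. by move=> h; case: (hGw nu (mem_set h)). Qed.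

Definition kfun (t : R) (i j : M -> nat) (x : X) : R :=
  (`|a i j x| * ((t * dotd (Gv j x) (Gv j x) + t^-1 * dotd (Gw i x) (Gw i x)) / 2))%R.

Lemma mkfun t i j : F i -> F j -> measurable_fun [set: X] (kfun t i j).
Proof.
move=> hi hj; rewrite /kfun.
apply: measurable_realfun.measurable_funM.
  exact: measurableT_comp (ma i j hi hj).
apply: measurable_realfun.measurable_funM => //.
apply: measurable_realfun.measurable_funD.
  by apply: measurable_realfun.measurable_funM => //; apply: mdot => k; apply: mGv.
by apply: measurable_realfun.measurable_funM => //; apply: mdot => k; apply: mGw.
Qed.

Lemma kfun_ge0 t i j x : (0 < t)%R -> (0 <= kfun t i j x)%R.
Proof.
move=> t0; rewrite /kfun mulr_ge0 // divr_ge0 // addr_ge0 // mulr_ge0 ?dotd_ge0 //.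
  exact: ltW.
by rewrite invr_ge0 ltW.
Qed.

Lemma term_bound t i j : (0 < t)%R -> F i -> F j ->
  `|Bterm mu a Gv Gw (i, j)| <= \int[mu]_x (kfun t i j x)%:E.
Proof.
move=> t0 hi hj; rewrite /Bterm /=.
have mB : measurable_fun [set: X] (fun x => a i j x * dotd (Gv j x) (Gw i x))%R.
  apply: measurable_realfun.measurable_funM; first exact: ma.
  by apply: mdot => k; [apply: mGv|apply: mGw].
apply: le_trans (le_abse_integral _ _ _) _ => //.
  exact/measurable_realfun.measurable_EFinP.
apply: ge0_le_integral => //.
- have -> : (fun x => `|(a i j x * dotd (Gv j x) (Gw i x))%:E|) =
      EFin \o (fun x => `|a i j x * dotd (Gv j x) (Gw i x)|%R) by [].
  apply/measurable_realfun.measurable_EFinP.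
  exact: measurableT_comp mB.
- apply/measurable_realfun.measurable_EFinP; exact: mkfun.
- move=> x _; rewrite /= lee_fin /kfun normrM ler_wpM2l //.
  exact: dotd_bound.
Qed.


Lemma seq_le_esum (T : choiceType) (S : set T) (s : seq T) (f : T -> \bar R) :
  uniq s -> (forall j, j \in s -> S j) ->
  \sum_(j <- s) f j <= \esum_(j in S) f j.
Proof.
move=> us sS; apply: esum_ge; exists [set` s].
  by split; [exact: finite_seq | move=> j /= js; exact: sS].
by rewrite fsbig_seq.
Qed.

Definition row nu x := \esum_(nu' in F) (`|a nu nu' x|)%:E.

Definition kf t i j x : R :=
  if (i \in F) && (j \in F) then kfun t i j x else 0%R.
Definition gq j x : R := if j \in F then dotd (Gv j x) (Gv j x) else 0%R.
Definition hq i x : R := if i \in F then dotd (Gw i x) (Gw i x) else 0%R.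

Lemma mkf t i j : measurable_fun [set: X] (kf t i j).
Proof.
have [h|h] := boolP ((i \in F) && (j \in F)); rewrite /kf.
  have -> : (fun x => if (i \in F) && (j \in F) then kfun t i j x else 0%R) = kfun t i j.
    by apply/funext => x; rewrite h.
  by case/andP: h => /set_mem hi /set_mem hj; exact: mkfun.
have -> : (fun x => if (i \in F) && (j \in F) then kfun t i j x else 0%R) = cst 0%R.
  by apply/funext => x; rewrite (negbTE h).
exact: measurable_cst.
Qed.

Lemma kf_ge0 t i j x : (0 < t)%R -> (0 <= kf t i j x)%R.
Proof. by move=> t0; rewrite /kf; case: ifP => _ //; exact: kfun_ge0. Qed.

Lemma mgq j : measurable_fun [set: X] (gq j).
Proof.
have [h|h] := boolP (j \in F); rewrite /gq.
  have -> : (fun x => if j \in F then dotd (Gv j x) (Gv j x) else 0%R) = (fun x => dotd (Gv j x) (Gv j x)).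
    by apply/funext => x; rewrite h.
  by apply: mdot => k; apply: mGv; exact: set_mem.
have -> : (fun x => if j \in F then dotd (Gv j x) (Gv j x) else 0%R) = cst 0%R.
  by apply/funext => x; rewrite (negbTE h).
exact: measurable_cst.
Qed.

Lemma mhq j : measurable_fun [set: X] (hq j).
Proof.
have [h|h] := boolP (j \in F); rewrite /hq.
  have -> : (fun x => if j \in F then dotd (Gw j x) (Gw j x) else 0%R) = (fun x => dotd (Gw j x) (Gw j x)).
    by apply/funext => x; rewrite h.
  by apply: mdot => k; apply: mGw; exact: set_mem.
have -> : (fun x => if j \in F then dotd (Gw j x) (Gw j x) else 0%R) = cst 0%R.
  by apply/funext => x; rewrite (negbTE h).
exact: measurable_cst.
Qed.

Lemma gq_ge0 j x : (0 <= gq j x)%R.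
Proof. by rewrite /gq; case: ifP => _ //; exact: dotd_ge0. Qed.

Lemma hq_ge0 j x : (0 <= hq j x)%R.
Proof. by rewrite /hq; case: ifP => _ //; exact: dotd_ge0. Qed.

Lemma rect_bound c t s1 s2 :
  (0 <= c)%R -> (0 < t)%R ->
  (forall nu, F nu -> {ae mu, forall x, row nu x <= c%:E}) ->
  uniq s1 -> uniq s2 -> (forall i, i \in s1 -> F i) -> (forall j, j \in s2 -> F j) ->
  \sum_(i <- s1) \sum_(j <- s2) `|Bterm mu a Gv Gw (i, j)| <=
  (t * c / 2)%:E * sqnormV mu Gv + (c / (2 * t))%:E * sqnormV mu Gw.
Proof.
move=> c0 t0 hc u1 u2 F1 F2.
have kfE i j x : i \in s1 -> j \in s2 -> kf t i j x = kfun t i j x.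
  by move=> i1 j2; rewrite /kf (mem_set (F1 _ i1)) (mem_set (F2 _ j2)).
apply: (@le_trans _ _ (\sum_(i <- s1) \sum_(j <- s2) \int[mu]_x (kf t i j x)%:E)).
  rewrite big_seq [leRHS]big_seq; apply: lee_sum => i i1.
  rewrite big_seq [leRHS]big_seq; apply: lee_sum => j j2.
  rewrite (eq_integral (fun x => (kfun t i j x)%:E)); last by move=> x _; rewrite kfE.
  exact: (term_bound t i j t0 (F1 i i1) (F2 j j2)).
have -> : \sum_(i <- s1) \sum_(j <- s2) \int[mu]_x (kf t i j x)%:E =
    \int[mu]_x (\sum_(i <- s1) \sum_(j <- s2) (kf t i j x)%:E).
  rewrite ge0_integral_sum //.
  - apply: eq_bigr => i _; rewrite ge0_integral_sum // => [j|j x _].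
      exact/measurable_realfun.measurable_EFinP/mkf.
    by rewrite lee_fin kf_ge0.
  - move=> i; apply: emeasurable_sum => j.
    exact/measurable_realfun.measurable_EFinP/mkf.
  - by move=> i x _; apply: sume_ge0 => j _; rewrite lee_fin kf_ge0.
pose rf x := (t * c / 2 * \sum_(j <- s2) gq j x + c / (2 * t) * \sum_(i <- s1) hq i x)%R.
have rf0 x : (0 <= rf x)%R.
  rewrite /rf addr_ge0 // mulr_ge0 //.
  - by rewrite divr_ge0 // mulr_ge0 // ltW.
  - by apply: sumr_ge0 => j _; exact: gq_ge0.
  - by rewrite divr_ge0 // mulr_ge0 // ltW.
  - by apply: sumr_ge0 => j _; exact: hq_ge0.
apply: (@le_trans _ _ (\int[mu]_x (rf x)%:E)).
  apply: ae_ge0_le_integral => //.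
  - by move=> x _; apply: sume_ge0 => i _; apply: sume_ge0 => j _; rewrite lee_fin kf_ge0.
  - apply: emeasurable_sum => i; apply: emeasurable_sum => j.
    exact/measurable_realfun.measurable_EFinP/mkf.
  - by move=> x _; rewrite lee_fin.
  - apply/measurable_realfun.measurable_EFinP; rewrite /rf.
    apply: measurable_realfun.measurable_funD.
      apply: measurable_realfun.measurable_funM => //.
      by apply: measurable_sum => j; exact: mgq.
    apply: measurable_realfun.measurable_funM => //.
    by apply: measurable_sum => j; exact: mhq.
  have P1 := @ae_seq R dX X mu _ s1 (fun i x => row i x <= c%:E) (fun i i1 => hc i (F1 i i1)).
  have P2 := @ae_seq R dX X mu _ s2 (fun j x => row j x <= c%:E) (fun j j2 => hc j (F2 j j2)).
  have P3 := @ae_seq R dX X mu _ s1 (fun i x => forall j, j \in s2 -> a i j x = a j i x)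
    (fun i i1 => @ae_seq R dX X mu _ s2 (fun j x => a i j x = a j i x)
      (fun j j2 => hsym i j (mem_set (F1 i i1)) (mem_set (F2 j j2)))).
  apply: filterS (filterI P1 (filterI P2 P3)) => x [p1 [p2 p3]] _.
  under eq_bigr do rewrite sumEFin.
  rewrite sumEFin lee_fin /rf.
  have -> : (\sum_(i <- s1) \sum_(j <- s2) kf t i j x =
      \sum_(i <- s1) \sum_(j <- s2) kfun t i j x)%R.
    rewrite big_seq [RHS]big_seq; apply: eq_bigr => i i1.
    by rewrite big_seq [RHS]big_seq; apply: eq_bigr => j j2; rewrite kfE.
  have -> : (\sum_(j <- s2) gq j x = \sum_(j <- s2) dotd (Gv j x) (Gv j x))%R.
    rewrite big_seq [RHS]big_seq; apply: eq_bigr => j j2.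
    by rewrite /gq (mem_set (F2 _ j2)).
  have -> : (\sum_(i <- s1) hq i x = \sum_(i <- s1) dotd (Gw i x) (Gw i x))%R.
    rewrite big_seq [RHS]big_seq; apply: eq_bigr => i i1.
    by rewrite /hq (mem_set (F1 _ i1)).
  apply: (@sum_rect R _ s1 s2 (fun i j => `|a i j x|%R)
     (fun j => dotd (Gv j x) (Gv j x)) (fun i => dotd (Gw i x) (Gw i x))) => //.
  - by move=> j; exact: dotd_ge0.
  - by move=> i; exact: dotd_ge0.
  - move=> i i1; rewrite -lee_fin -sumEFin; apply: le_trans (p1 i i1).
    by apply: seq_le_esum => // j j2; exact: F2.
  - move=> j j2.
    have -> : (\sum_(i <- s1) `|a i j x| = \sum_(i <- s1) `|a j i x|)%R.
      by rewrite big_seq [RHS]big_seq; apply: eq_bigr => i i1; rewrite p3.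
    rewrite -lee_fin -sumEFin; apply: le_trans (p2 j j2).
    by apply: seq_le_esum => // i i1; exact: F1.
have tc0 : (0 <= t * c / 2)%R by rewrite divr_ge0 // mulr_ge0 // ltW.
have ct0 : (0 <= c / (2 * t))%R by rewrite divr_ge0 // mulr_ge0 // ltW.
rewrite /rf.
under eq_integral => x _ do rewrite EFinD (EFinM (t * c / 2)) (EFinM (c / (2 * t))) -!sumEFin.
rewrite ge0_integralD //; last 4 first.
- by move=> x _; rewrite mule_ge0 // sume_ge0 // => j _; rewrite lee_fin gq_ge0.
- apply: measurable_funeM; apply: emeasurable_sum => j.
  exact/measurable_realfun.measurable_EFinP/mgq.
- by move=> x _; rewrite mule_ge0 // sume_ge0 // => j _; rewrite lee_fin hq_ge0.
- apply: measurable_funeM; apply: emeasurable_sum => j.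
  exact/measurable_realfun.measurable_EFinP/mhq.
rewrite !ge0_integralZl_EFin //; last 4 first.
- by move=> x _; rewrite sume_ge0 // => j _; rewrite lee_fin hq_ge0.
- apply: emeasurable_sum => j.
  exact/measurable_realfun.measurable_EFinP/mhq.
- by move=> x _; rewrite sume_ge0 // => j _; rewrite lee_fin gq_ge0.
- apply: emeasurable_sum => j.
  exact/measurable_realfun.measurable_EFinP/mgq.
rewrite !ge0_integral_sum //; last 4 first.
- by move=> j; exact/measurable_realfun.measurable_EFinP/mhq.
- by move=> j x _; rewrite lee_fin hq_ge0.
- by move=> j; exact/measurable_realfun.measurable_EFinP/mgq.
- by move=> j x _; rewrite lee_fin gq_ge0.
apply: leeD; apply: lee_wpmul2l; rewrite ?lee_fin //.
- have -> : \sum_(j <- s2) \int[mu]_x (gq j x)%:E =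
      \sum_(j <- s2) \int[mu]_x (dotd (Gv j x) (Gv j x))%:E.
    rewrite big_seq [RHS]big_seq; apply: eq_bigr => j j2.
    by apply: eq_integral => x _; rewrite /gq (mem_set (F2 _ j2)).
  by apply: seq_le_esum => // j j2; exact: F2.
- have -> : \sum_(i <- s1) \int[mu]_x (hq i x)%:E =
      \sum_(i <- s1) \int[mu]_x (dotd (Gw i x) (Gw i x))%:E.
    rewrite big_seq [RHS]big_seq; apply: eq_bigr => i i1.
    by apply: eq_integral => x _; rewrite /hq (mem_set (F1 _ i1)).
  by apply: seq_le_esum => // i i1; exact: F1.
Qed.


Lemma main_bound c t :
  (0 <= c)%R -> (0 < t)%R ->
  (forall nu, F nu -> {ae mu, forall x, row nu x <= c%:E}) ->
  \esum_(p in F `*` F) `|Bterm mu a Gv Gw p| <=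
  (t * c / 2)%:E * sqnormV mu Gv + (c / (2 * t))%:E * sqnormV mu Gw.
Proof.
move=> c0 t0 hc.
apply: ge_ereal_sup => _ [A [finA AF] <-].
pose s := finmap.enum_fset (fset_set A).
pose s1 := undup (map fst s); pose s2 := undup (map snd s).
have sA p : p \in s -> A p.
  by rewrite /s in_fset_set // => /set_mem.
apply: (@le_trans _ _ (\sum_(p \in [set` s1] `*` [set` s2]) `|Bterm mu a Gv Gw p|)).
  apply: lee_fsum_nneg_subset => //.
  - by apply: finite_setX; exact: finite_seq.
  - move=> p /set_mem Ap; apply/mem_set; split => /=.
      by rewrite mem_undup; apply/mapP; exists p => //; rewrite /s in_fset_set // mem_set.
    by rewrite mem_undup; apply/mapP; exists p => //; rewrite /s in_fset_set // mem_set.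
rewrite (eq_fsbigr (fun p => `|Bterm mu a Gv Gw (p.1, p.2)|)); last by case.
rewrite -(pair_fsbig _ (fun i j => `|Bterm mu a Gv Gw (i, j)|)) ?finite_seq //.
rewrite -fsbig_seq ?undup_uniq //.
under eq_bigr do rewrite -fsbig_seq ?undup_uniq //.
apply: rect_bound => //; try exact: undup_uniq.
- move=> i; rewrite mem_undup => /mapP[p /sA /AF [h _] ->]; exact: h.
- move=> j; rewrite mem_undup => /mapP[p /sA /AF [_ h] ->]; exact: h.
Qed.


Lemma int_zero (G : (M -> nat) -> X -> 'I_d -> R)
  (hG : forall nu, nu \in F -> L2field mu (G nu)) nu :
  F nu -> sqnormV mu G = 0 -> {ae mu, forall x, dotd (G nu x) (G nu x) = 0%R}.
Proof.
move=> hnu S0.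
have mGk : forall k, measurable_fun setT (fun x => G nu x k).
  by move=> k; case: (hG nu (mem_set hnu)).
have mf := (@measurable_realfun.measurable_EFinP _ _ _ setT _).2 (mdot (G nu) (G nu) mGk mGk).
have I0 : \int[mu]_x (dotd (G nu x) (G nu x))%:E = 0.
  apply/eqP; rewrite eq_le integral_ge0 ?andbT; last first.
    by move=> x _; rewrite lee_fin dotd_ge0.
  rewrite -S0 /sqnormV; apply: esum_ge; exists [set nu].
    by split; [exact: finite_set1 | move=> ? ->].
  by rewrite fsbig_set1.
have : \int[mu]_x `|(dotd (G nu x) (G nu x))%:E| = 0.
  by rewrite -I0; apply: eq_integral => x _; rewrite gee0_abs // lee_fin dotd_ge0.
move/(ae_eq_integral_abs mu measurableT mf).
by apply: filterS => x /(_ I) [].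
Qed.

Lemma bterm_zero p : (F `*` F) p ->
  (sqnormV mu Gv = 0 \/ sqnormV mu Gw = 0) -> Bterm mu a Gv Gw p = 0.
Proof.
case: p => i j [hi hj] /= H.
rewrite /Bterm /=.
have mB : measurable_fun [set: X] (fun x => a i j x * dotd (Gv j x) (Gw i x))%R.
  apply: measurable_realfun.measurable_funM; first exact: ma.
  by apply: mdot => k; [apply: mGv|apply: mGw].
rewrite (ae_eq_integral (cst 0)) ?integral0 //.
- exact/measurable_realfun.measurable_EFinP.
- case: H => S0.
    have := int_zero Gv hGv j hj S0.
    by apply: filterS => x h _; rewrite /= dotd0l ?mulr0.
  have := int_zero Gw hGw i hi S0.
  by apply: filterS => x h _; rewrite /= dotd0r ?mulr0.
Qed.

Lemma E_zero : (sqnormV mu Gv = 0 \/ sqnormV mu Gw = 0) ->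
  \esum_(p in F `*` F) `|Bterm mu a Gv Gw p| = 0.
Proof. by move=> H; apply: esum1 => p hp; rewrite bterm_zero // abse0. Qed.

Lemma aeF_zero (G : (M -> nat) -> X -> 'I_d -> R)
  (hG : forall nu, nu \in F -> L2field mu (G nu)) :
  {ae mu, forall x : X, False} -> sqnormV mu G = 0.
Proof.
move=> [N [mN N0 sN]].
have NT : N = setT by apply/seteqP; split => // x _; apply: sN.
rewrite /sqnormV; apply: esum1 => nu hnu.
rewrite NT in N0.
have mGk : forall k, measurable_fun setT (fun x => G nu x k).
  by move=> k; case: (hG nu (mem_set hnu)).
have mf := (@measurable_realfun.measurable_EFinP _ _ _ setT _).2 (mdot (G nu) (G nu) mGk mGk).
exact: (null_set_integral measurableT mf N0).
Qed.


Lemma final (hv : sqnormV mu Gv < +oo) (hw : sqnormV mu Gw < +oo) :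
  (schur_bound mu a < +oo ->
     summable (F `*` F) (Bterm mu a Gv Gw)) /\
  (`| Bform mu a Gv Gw | <= schur_bound mu a * (normV mu Gv * normV mu Gw)%:E).
Proof.
set C := schur_bound mu a.
have nu0F : F (fun _ => 0%N).
  rewrite /mindices /=; apply: (sub_finite_set _ (finite_set0 M)).
  by move=> m /= /eqP.
have ROW : forall c, C <= c%:E -> forall nu, F nu -> {ae mu, forall x, row nu x <= c%:E}.
  move=> c hC nu hnu; apply/ess_supP; apply: le_trans hC.
  by apply: ereal_sup_ubound; exists nu.
have Sge0 : forall G : (M -> nat) -> X -> 'I_d -> R, 0 <= sqnormV mu G.
  move=> G; apply: esum_ge0 => nu _; apply: integral_ge0 => x _.
  by rewrite lee_fin dotd_ge0.
have SvE : sqnormV mu Gv = (fine (sqnormV mu Gv))%:E.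
  by rewrite fineK // ge0_fin_numE.
have SwE : sqnormV mu Gw = (fine (sqnormV mu Gw))%:E.
  by rewrite fineK // ge0_fin_numE.
have Nv0 : (0 <= fine (sqnormV mu Gv))%R by rewrite fine_ge0.
have Nw0 : (0 <= fine (sqnormV mu Gw))%R by rewrite fine_ge0.
split.
  move=> Cfin.
  pose c := if C is r%:E then Num.max r 0%R else 0%R.
  have hC : C <= c%:E.
    rewrite /c; case eC : C => [r| |] /=.
    - by rewrite lee_fin le_max lexx.
    - by move: Cfin; rewrite eC.
    - exact: leNye.
  have c0 : (0 <= c)%R.
    by rewrite /c; case eC : C => [r| |] //=; rewrite le_max lexx orbT.
  rewrite /summable; apply: le_lt_trans (main_bound c 1%R c0 ltr01 (ROW c hC)) _.
  by rewrite SvE SwE -!EFinM -EFinD ltry.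
rewrite /Bform; apply: le_trans (ssum_le _ _ _ _) _.
rewrite /normV.
have [Cneg|Cnn] := ltP C 0.
  pose c := if C is r%:E then r else (-1)%R.
  have hC : C <= c%:E.
    by rewrite /c; case eC : C => [r| |] //=; [move: Cneg; rewrite eC | exact: leNye].
  have c0 : (c < 0)%R.
    by rewrite /c; move: Cneg; case eC : C => [r| |] //=; rewrite lte_fin.
  have aeF : {ae mu, forall x : X, False}.
    apply: filterS (ROW c hC _ nu0F) => x h.
    have : 0 <= row (fun _ => 0%N) x by apply: esum_ge0.
    move=> /le_trans /(_ h); rewrite lee_fin => c0'.
    by move: c0; rewrite ltNge c0'.
  rewrite E_zero; last by left; exact: (aeF_zero Gv hGv aeF).
  by rewrite (aeF_zero Gv hGv aeF) /= sqrtr0 mul0r mule0.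
move: Cnn; case eC : C => [r| |] //= r0; last first.
  have [p0|p0] := ltP 0%R (Num.sqrt (fine (sqnormV mu Gv)) * Num.sqrt (fine (sqnormV mu Gw)))%R.
    by rewrite gt0_mulye ?lte_fin // leey.
  have pe : (Num.sqrt (fine (sqnormV mu Gv)) * Num.sqrt (fine (sqnormV mu Gw)) = 0)%R.
    by apply/eqP; rewrite eq_le p0 mulr_ge0 // sqrtr_ge0.
  rewrite pe mule0 E_zero //.
  move/eqP: pe; rewrite mulf_eq0 !sqrtr_eq0 => /orP[h|h].
    by left; rewrite SvE; congr EFin; apply/eqP; rewrite eq_le h Nv0.
  by right; rewrite SwE; congr EFin; apply/eqP; rewrite eq_le h Nw0.
rewrite lee_fin in r0.
have hCr : C <= r%:E by rewrite eC.
have Efin : \esum_(p in F `*` F) `|Bterm mu a Gv Gw p| \is a fin_num.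
  rewrite ge0_fin_numE; last by apply: esum_ge0.
  apply: le_lt_trans (main_bound r 1%R r0 ltr01 (ROW r hCr)) _.
  by rewrite SvE SwE -!EFinM -EFinD ltry.
rewrite -(fineK Efin) -EFinM lee_fin.
apply: opt_bound => // t t0.
rewrite -lee_fin (fineK Efin).
apply: le_trans (main_bound r t r0 t0 (ROW r hCr)) _.
by rewrite SvE SwE -!EFinM -EFinD.
Qed.

End main.

Theorem lemma3p2 (R : realType) (dX : measure_display) (X : measurableType dX)
  (mu : {measure set X -> \bar R}) (d : nat) (M : countType)
  (a : (M -> nat) -> (M -> nat) -> X -> R)
  (ha : forall nu nu', nu \in mindices M -> nu' \in mindices M ->
          Linfty mu (a nu nu'))
  (hsym : forall nu nu', nu \in mindices M -> nu' \in mindices M ->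
          {ae mu, forall x, a nu nu' x = a nu' nu x})
  (Gv Gw : (M -> nat) -> X -> 'I_d -> R)
  (hGv : forall nu, nu \in mindices M -> L2field mu (Gv nu))
  (hGw : forall nu, nu \in mindices M -> L2field mu (Gw nu))
  (hv : (sqnormV mu Gv < +oo)%E) (hw : (sqnormV mu Gw < +oo)%E) :
  ((schur_bound mu a < +oo)%E ->
     summable (mindices M `*` mindices M) (Bterm mu a Gv Gw)) /\
  (`| Bform mu a Gv Gw | <= schur_bound mu a * (normV mu Gv * normV mu Gw)%:E)%E.
Proof.
exact: (@final R dX X mu d M a ha hsym Gv Gw hGv hGw hv hw).
Qed.
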